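(* Let $A\in\mathbb{R}^{n\times n}$, $B\in\mathbb{R}^{n\times m}$, $C\in\mathbb{R}^{p\times n}$, $D\in\mathbb{R}^{p\times m}$ and $K\in\mathbb{N}$, and let $$\mathcal{O}_K=\begin{bmatrix} C^\top & (CA)^\top & \cdots & (CA^{K-1})^\top\end{bmatrix}^\top\in\mathbb{R}^{pK\times n}.$$ Assume $\mathcal{O}_K$ has full column rank, and set $\mathcal{W}_o:=\mathcal{O}_K^\top\mathcal{O}_K$. Let $\Sigma_v\in\mathbb{R}^{n\times n}$ with $\Sigma_v\succ 0$. Consider the matrix equation $$(\mathcal{O}_K^\top X\mathcal{O}_K)^{-1}=\Sigma_v \qquad (\ast)$$ in the unknown $X\in\mathbb{R}^{pK\times pK}$, and the set $S_X:=\{X\in\mathbb{R}^{pK\times pK}\mid (\ast)\text{ holds}\}$. Then: (i) $S_X$ is nonempty and $$S_X=\{N^\top N+R-MRM \mid R\in\mathbb{R}^{pK\times pK}\},$$ where $M:=\mathcal{O}_K\mathcal{W}_o^{-1}\mathcal{O}_K^\top$ and $N:=\Sigma_v^{-1/2}\mathcal{W}_o^{-1}\mathcal{O}_K^\top$. (ii) The set $S_X^+:=\{X\in S_X\mid X\succ 0\}$ is nonempty. (iii) If $pK=n$, then $S_X^+$ is a singleton, namely $S_X^+=\{N^\top N\}$.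
   Context: $\Sigma_v^{-1/2}$ denotes the symmetric positive definite square root of $\Sigma_v^{-1}$. For a square matrix, $X\succ 0$ means $X$ is symmetric positive definite. Equation $(\ast)$ includes the requirement that $\mathcal{O}_K^\top X\mathcal{O}_K$ be invertible. *)

(* Defs.v *)
From HB Require Import structures.
From mathcomp Require Import all_boot all_order all_algebra.
From mathcomp Require Import reals.
Set Implicit Arguments. Unset Strict Implicit. Unset Printing Implicit Defensive.
Import Order.TTheory GRing.Theory Num.Theory.
Local Open Scope ring_scope.

Definition posdef (R : realType) (k : nat) (X : 'M[R]_k) : Prop :=
  X^T = X /\ forall v : 'cV[R]_k, v != 0 -> 0 < (v^T *m X *m v) 0 0.

(* Extended observability matrix O_K = [C; CA; ...; CA^(K-1)] in R^{(K*p) x n};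
   row index K-block k, within-block row r corresponds to row k*p + r. *)
Definition obsv (R : realType) (n p K : nat) (A : 'M[R]_n) (C : 'M[R]_(p, n))
  : 'M[R]_(K * p, n) :=
  \matrix_(i < K * p, j < n)
    let kr := enum_val (cast_ord (esym (@mxvec_cast K p)) i) in
    (C *m A ^+ (nat_of_ord kr.1)) kr.2 j.

Definition eq_star (R : realType) (n N : nat) (O : 'M[R]_(N, n))
  (Sv : 'M[R]_n) (X : 'M[R]_N) : Prop :=
  (O^T *m X *m O) \in unitmx /\ invmx (O^T *m X *m O) = Sv.

(* Main.v *)
Require Import Defs.
From HB Require Import structures.
From mathcomp Require Import all_boot all_order all_algebra.
From mathcomp Require Import reals.
Import Order.TTheory GRing.Theory Num.Theory.
Local Open Scope ring_scope.

Section H.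
Context {R : realType}.

Lemma inj_unit k (A : 'M[R]_k) : (forall v : 'cV_k, A *m v = 0 -> v = 0) -> A \in unitmx.
Proof.
move=> h; rewrite -unitmx_tr unitmxE unitfE; apply/det0P => -[v nv hv].
move/eqP: nv; apply; apply: trmx_inj; rewrite trmx0; apply: h.
have: (v *m A^T)^T = 0 by rewrite hv trmx0.
by rewrite trmx_mul trmxK.
Qed.

Lemma sqE k (w : 'cV[R]_k) : (w^T *m w) 0 0 = \sum_i w i 0 ^+ 2.
Proof. rewrite !mxE; apply: eq_bigr => i _; by rewrite !mxE expr2. Qed.

Lemma sq_ge0 k (w : 'cV[R]_k) : 0 <= (w^T *m w) 0 0.
Proof. rewrite sqE; apply: sumr_ge0 => i _; exact: sqr_ge0. Qed.

Lemma sq_eq0 k (w : 'cV[R]_k) : (w^T *m w) 0 0 = 0 -> w = 0.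
Proof.
rewrite sqE => /psumr_eq0P h; apply/matrixP => i j; rewrite (ord1 j) mxE.
by apply/eqP; rewrite -sqrf_eq0; apply/eqP; apply: h => // l _; exact: sqr_ge0.
Qed.

Lemma posdef_unit k (S : 'M[R]_k) : posdef S -> S \in unitmx.
Proof.
move=> [_ h]; apply: inj_unit => v hv; apply/eqP; apply: contraT => nv.
by move: (h v nv); rewrite -mulmxA hv mulmx0 mxE ltxx.
Qed.
Lemma mulVmxR k (W : 'M[R]_k) : W \in unitmx -> @mulmx R k k k (invmx W) W = 1%:M.
Proof. exact: mulVmx. Qed.
Lemma mulmxVR k (W : 'M[R]_k) : W \in unitmx -> @mulmx R k k k W (invmx W) = 1%:M.
Proof. exact: mulmxV. Qed.
End H.
Arguments posdef_unit {R k S}.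

Theorem theorem5 (R : realType) (n m p K : nat)
  (A : 'M[R]_n) (B : 'M[R]_(n, m)) (C : 'M[R]_(p, n)) (D : 'M[R]_(p, m))
  (Sv : 'M[R]_n) (Svih : 'M[R]_n) :
  \rank (obsv K A C) = n ->
  posdef Sv ->
  (* Svih is the symmetric positive definite square root of Sv^{-1} *)
  posdef Svih -> Svih *m Svih = invmx Sv ->
  let O := obsv K A C in
  let Wo := O^T *m O in
  let M := O *m invmx Wo *m O^T in
  let N := Svih *m invmx Wo *m O^T in
  (exists X : 'M[R]_(K * p), eq_star O Sv X) /\
  (forall X : 'M[R]_(K * p),
      eq_star O Sv X <-> exists Rm : 'M[R]_(K * p), X = N^T *m N + Rm - M *m Rm *m M) /\
  (exists X : 'M[R]_(K * p), eq_star O Sv X /\ posdef X) /\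
  ((p * K)%N = n ->
    forall X : 'M[R]_(K * p), (eq_star O Sv X /\ posdef X) <-> X = N^T *m N).
Proof.
move=> hr hSv hS hSS; move: (obsv K A C) hr => O0 hr O Wo M N.
have WoE : Wo = O^T *m O by [].
have ME : M = O *m invmx Wo *m O^T by [].
have NE : N = Svih *m invmx Wo *m O^T by [].
have OE : O = O0 by [].
clearbody N M Wo O; subst O0.
set S := Svih in hS hSS NE *.
have hSu := posdef_unit hS.
have hST : S^T = S by case: hS.
have hOf : row_free O^T by rewrite /row_free mxrank_tr hr.
have hWu : Wo \in unitmx.
  apply: inj_unit => v; rewrite WoE => hv.
  have : ((O *m v)^T *m (O *m v)) 0 0 = 0.
    by rewrite trmx_mul -!mulmxA (mulmxA _ O v) hv mulmx0 mxE.
  move/sq_eq0 => hOv; apply: trmx_inj; rewrite trmx0.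
  apply: (row_free_inj hOf); by rewrite /= -trmx_mul hOv trmx0 mul0mx.
have hWT : Wo^T = Wo by rewrite WoE trmx_mul trmxK.
have hWiT : (invmx Wo)^T = invmx Wo by rewrite trmx_inv hWT.
have hMO : M *m O = O.
 rewrite ME -!mulmxA -WoE mulVmxR //. by rewrite mulmx1.
have hOM : O^T *m M = O^T by rewrite ME !mulmxA -WoE mulmxVR // mul1mx.
have hNO : N *m O = S.
 by rewrite NE -!mulmxA -WoE mulVmxR // mulmx1.
have hNN : O^T *m (N^T *m N) *m O = invmx Sv.
  by rewrite !mulmxA -(mulmxA _ N O) hNO -trmx_mul hNO hST hSS.
have hMXM : forall X, O^T *m X *m O = invmx Sv -> M *m X *m M = N^T *m N.
  move=> X h; rewrite ME NE.
  have -> : O *m invmx Wo *m O^T *m X *m (O *m invmx Wo *m O^T)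
     = O *m invmx Wo *m (O^T *m X *m O) *m invmx Wo *m O^T by rewrite !mulmxA.
  by rewrite h -hSS !trmx_mul trmxK hWiT hST !mulmxA.
have hRM : forall Rm, O^T *m (Rm - M *m Rm *m M) *m O = 0.
  move=> Rm; rewrite mulmxBr mulmxBl !mulmxA hOM -(mulmxA _ M O) hMO.
  by rewrite -!mulmxA subrr.
have eqE : forall X, eq_star O Sv X <-> O^T *m X *m O = invmx Sv.
  move=> X; split; first by case=> _ <-; rewrite invmxK.
  by move=> h; rewrite /eq_star h unitmx_inv invmxK (posdef_unit hSv).
have hMT : M^T = M by rewrite ME !trmx_mul trmxK hWiT mulmxA.
have hMM : M *m M = M by rewrite {1}ME -mulmxA hOM -ME.
have hX0 : posdef (N^T *m N + 1%:M - M *m 1%:M *m M).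
  rewrite mulmx1 hMM -addrA.
  set P := 1%:M - M.
  have hPT : P^T = P by rewrite /P raddfB /= trmx1 hMT.
  have hPP : P *m P = P.
    by rewrite /P mulmxBl mul1mx mulmxBr mulmx1 hMM subrr subr0.
  split; first by rewrite raddfD /= hPT trmx_mul trmxK.
  move=> v nv; rewrite mulmxDr mulmxDl mxE.
  have e1 : v^T *m (N^T *m N) *m v = (N *m v)^T *m (N *m v)
    by rewrite trmx_mul !mulmxA.
  have e2 : v^T *m P *m v = (P *m v)^T *m (P *m v)
    by rewrite trmx_mul hPT !mulmxA -(mulmxA _ P P) hPP.
  rewrite e1 e2 lt_def addr_ge0 ?sq_ge0 // andbT.
  apply: contra nv; rewrite paddr_eq0 ?sq_ge0 // => /andP[/eqP/sq_eq0 hNv /eqP/sq_eq0 hPv].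
  have hv : v = M *m v by apply/eqP; rewrite -subr_eq0 -{1}(mul1mx v) -mulmxBl hPv.
  have hw : invmx Wo *m (O^T *m v) = 0.
    have : @mulmx R _ _ _ (invmx S) (N *m v) = 0 by rewrite hNv mulmx0.
    by rewrite NE -!mulmxA mulmxA mulVmxR // mul1mx.
  by rewrite hv ME -!mulmxA hw mulmx0.
split; first by exists (N^T *m N); apply/eqE.
split.
  move=> X; split.
    move=> h; exists X; rewrite (hMXM X (proj1 (eqE X) h)).
    by rewrite addrAC subrr add0r.
  by move=> [Rm ->]; apply/eqE; rewrite -addrA mulmxDr mulmxDl hNN hRM addr0.
split.
  exists (N^T *m N + 1%:M - M *m 1%:M *m M); split => //; apply/eqE.
  by rewrite -addrA mulmxDr mulmxDl hNN hRM addr0.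
move=> hpk.
have hOfree : row_free O by rewrite /row_free hr mulnC hpk.
have hM1 : M = 1%:M by apply: (row_free_inj hOfree); rewrite /= hMO mul1mx.
move=> X; split.
  move=> [h _]; have := hMXM X (proj1 (eqE X) h).
  by rewrite hM1 mulmx1 mul1mx.
move=> ->; split; first by apply/eqE.
by move: hX0; rewrite hM1 !mulmx1 addrK.
Qed.
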